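(* Let $(A,\mathrm{cl})$ be a finite pregeometry with dimension function $d$. Let $X\subseteq A$ be a union of closed sets with $d(X)\ge 2$, and let $\mathcal F(X)$ be the set of closed sets $F$ of $A$ with $F\subsetneq X$. Then $\alpha(X)=-\Delta(\mathcal F(X))$.
   Context: For a pregeometry $(A,\mathrm{cl})$ with dimension function $d$, a closed set is $F$ with $\mathrm{cl}(F)=F$. If $\mathcal F=\{F_i:i\in I\}$ is a non-empty finite set of distinct finite-dimensional closed sets, put $F_S=\bigcap_{i\in S}F_i$ for $\emptyset\ne S\subseteq I$ and $F_\emptyset=\bigcup_{i\in I}F_i$, and define $\Delta(\mathcal F)=\sum_{S\subseteq I}(-1)^{|S|}d(F_S)$. For a finite pregeometry, the $\alpha$-function is defined on unions of closed sets $X$ recursively by $\alpha(X)=|X|-d(X)-\sum_G\alpha(G)$, the sum over closed $G\subsetneq X$. *)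

(* Defs.v *)
From HB Require Import structures.
From mathcomp Require Import all_boot all_order all_algebra.
Set Implicit Arguments. Unset Strict Implicit. Unset Printing Implicit Defensive.
Import GRing.Theory Num.Theory.
Local Open Scope ring_scope.

Record pregeometry (T : finType) (cl : {set T} -> {set T}) : Prop := {
  pg_ext : forall A : {set T}, A \subset cl A;
  pg_mono : forall A B : {set T}, A \subset B -> cl A \subset cl B;
  pg_idem : forall A : {set T}, cl (cl A) = cl A;
  pg_exchange : forall (A : {set T}) (a b : T),
    a \in cl (b |: A) -> a \notin cl A -> b \in cl (a |: A)
  (* finite character is automatic since T is finite *)
}.

Definition closed (T : finType) (cl : {set T} -> {set T}) (F : {set T}) : bool :=
  cl F == F.

(* dimension: the size of a basis of X, i.e. the least size of a subset of X
   whose closure contains X *)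
Definition gdim (T : finType) (cl : {set T} -> {set T}) (X : {set T}) : nat :=
  \big[minn/#|X|]_(B : {set T} | (B \subset X) && (X \subset cl B)) #|B|.

Definition union_of_closed (T : finType) (cl : {set T} -> {set T}) (X : {set T}) : Prop :=
  exists FF : {set {set T}},
    (forall F, F \in FF -> closed cl F) /\ X = \bigcup_(F in FF) F.

Definition F_S (T : finType) (FF S : {set {set T}}) : {set T} :=
  if S == set0 then \bigcup_(F in FF) F else \bigcap_(F in S) F.

Definition Delta (T : finType) (cl : {set T} -> {set T}) (FF : {set {set T}}) : int :=
  \sum_(S in powerset FF) (-1) ^+ #|S| * (gdim cl (F_S FF S))%:Z.

(* alpha, via fuel recursion on the size (proper subsets are strictly smaller) *)
Fixpoint alpha_aux (T : finType) (cl : {set T} -> {set T}) (n : nat) (X : {set T}) : int :=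
  match n with
  | 0 => 0
  | n'.+1 => (#|X|%:Z - (gdim cl X)%:Z
              - \sum_(G : {set T} | closed cl G && (G \proper X)) alpha_aux cl n' G)%R
  end.

Definition alpha (T : finType) (cl : {set T} -> {set T}) (X : {set T}) : int :=
  alpha_aux cl #|X|.+1 X.

Definition FamX (T : finType) (cl : {set T} -> {set T}) (X : {set T}) : {set {set T}} :=
  [set F : {set T} | closed cl F & F \proper X].

(* Main.v *)
Require Import Defs.
From mathcomp Require Import all_boot all_order all_algebra.
Import GRing.Theory Num.Theory.
Set Implicit Arguments. Unset Strict Implicit.
Local Open Scope ring_scope.

Lemma set0Pn' (U : finType) (B : {set U}) a : a \in B -> B != set0.
Proof. by move=> aB; apply/set0Pn; exists a. Qed.

Lemma alt_sum (U : finType) (B : {set U}) :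
  \sum_(S in powerset B) (-1) ^+ #|S| = (B == set0)%:R :> int.
Proof.
have [->|/set0Pn [a aB]] := eqVneq B set0.
  by rewrite powerset0 big_set1 cards0 expr0.
rewrite (bigID (fun S : {set U} => a \in S)) /=.
rewrite (reindex_onto (fun S => a |: S) (fun S => S :\ a)); last first.
  by move=> S /andP[_ aS]; rewrite setD1K.

rewrite -[X in X + _]opprK addrC; apply/eqP; rewrite subr_eq0; apply/eqP.
rewrite -sumrN; apply: eq_big => S.
  rewrite !inE eqxx /= subUset sub1set aB /=.
  case: (boolP (a \in S)) => aS /=; last by rewrite setU1K // eqxx !andbT.
  rewrite !andbF andbT; symmetry; apply/negbTE; apply/negP => /andP[_ /eqP E].
  by move: aS; rewrite -E setD11.
move=> /andP[_ aS]; rewrite cardsU1 aS /= exprS mulN1r opprK //.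
Qed.

Lemma alpha_aux_eq (T : finType) (cl : {set T} -> {set T}) n m (X : {set T}) :
  (#|X| < n)%N -> (#|X| < m)%N -> alpha_aux cl n X = alpha_aux cl m X.
Proof.
elim: n m X => [|n IH] [|m] X //= hn hm.
congr (_ - _); apply: eq_bigr => G /andP[_ pG].
have := proper_card pG => hG.
by apply: IH; apply: leq_trans hG _.
Qed.

Lemma alpha_unfold (T : finType) (cl : {set T} -> {set T}) (X : {set T}) :
  alpha cl X = #|X|%:Z - (gdim cl X)%:Z
     - \sum_(G : {set T} | Defs.closed cl G && (G \proper X)) alpha cl G.
Proof.
rewrite /alpha /=; congr (_ - _); apply: eq_bigr => G /andP[_ pG].
by rewrite (@alpha_aux_eq T cl #|X| #|G|.+1 G (proper_card pG) (ltnSn _)).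
Qed.

Lemma card_sum (T : finType) (A X : {set T}) : A \subset X ->
  #|A|%:Z = \sum_(x in X) (x \in A)%:R.
Proof.
move=> AX; rewrite (eq_bigr (fun x => if x \in A then 1 else 0)); last by move=> x _; case: (x \in A).
rewrite -big_mkcondr /=.
rewrite (eq_bigl (fun x => x \in A)); last first.
  by move=> x /=; case: (boolP (x \in A)) => xA; rewrite ?andbF ?andbT // (subsetP AX).
by rewrite sumr_const -natz.
Qed.

Lemma bigmin_le (I : finType) (P : pred I) (F : I -> nat) m j :
  P j -> (\big[minn/m]_(i | P i) F i <= F j)%N.
Proof.
move=> Pj; rewrite unlock.
have : j \in index_enum I by rewrite mem_index_enum.
elim: (index_enum I) => //= a r IH; rewrite inE => /orP [/eqP <-|jr].
  by rewrite Pj geq_minl.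
case: (P a); last exact: IH jr.
exact: leq_trans (geq_minr _ _) (IH jr).
Qed.

Unset Implicit Arguments. Set Strict Implicit.

Theorem lemma4p2 (T : finType) (cl : {set T} -> {set T})
  (Hpg : pregeometry cl) (X : {set T})
  (HX : union_of_closed cl X) (Hd : (2 <= gdim cl X)%N) :
  alpha cl X = (- Delta cl (FamX cl X))%R.
Proof.
case: Hpg => ext mono idem _.
set FF := FamX cl X.
have inFF F : (F \in FF) = Defs.closed cl F && (F \proper X) by rewrite inE.
have cupFF : \bigcup_(F in FF) F = X.
  apply/eqP; rewrite eqEsubset; apply/andP; split.
    by apply/bigcupsP => F; rewrite inFF => /andP[_ /proper_sub].
  apply/subsetP => x xX.
  case: HX => FF0 [cFF0 defX].
  have := xX; rewrite defX => /bigcupP [F0 F0in xF0].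
  have clF0 : cl F0 = F0 by apply/eqP; apply: cFF0.
  have sclX : cl [set x] \subset X.
    apply: subset_trans (mono _ _ _) _; first by rewrite sub1set; exact: xF0.
    by rewrite clF0 defX; apply: bigcup_sup.
  apply/bigcupP; exists (cl [set x]); last first.
    by move: (ext [set x]); rewrite sub1set.
  rewrite inFF /Defs.closed idem eqxx /= properEneq sclX andbT.
  apply/eqP => E; move: Hd; rewrite /gdim => Hd.
  have := leq_trans Hd (@bigmin_le {set T} (fun B : {set T} => (B \subset X) && (X \subset cl B)) (fun B : {set T} => #|B|) #|X| [set x] _).
  by rewrite cards1 sub1set xX E subxx => /(_ isT).
have capS (S : {set {set T}}) : S \subset FF -> S != set0 ->
    Defs.closed cl (\bigcap_(F in S) F) && (\bigcap_(F in S) F \proper X).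
  move=> SFF /set0Pn [F FS].
  have := subsetP SFF F FS; rewrite inFF => /andP[cF pF].
  apply/andP; split; last by apply: sub_proper_trans pF; exact: bigcap_inf.
  rewrite /Defs.closed eqEsubset ext andbT; apply/bigcapsP => G GS.
  have := subsetP SFF G GS; rewrite inFF => /andP[/eqP cG _].
  by rewrite -cG; apply: mono; exact: bigcap_inf.
have FS_ok (S : {set {set T}}) : S \in powerset FF ->
    F_S FF S = X \/ (Defs.closed cl (F_S FF S) && (F_S FF S \proper X)).
  rewrite powersetE /F_S => SFF; case: (eqVneq S set0) => [_|S0].
    by left; exact: cupFF.
  by right; exact: capS.
pose P (H : {set T}) := (H == X) || (Defs.closed cl H && (H \proper X)).
have fsum (Y : {set T}) : Y = X \/ (Defs.closed cl Y && (Y \proper X)) ->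
    #|Y|%:Z - (gdim cl Y)%:Z = \sum_(H | P H && (H \subset Y)) alpha cl H.
  move=> hY; rewrite (bigD1 Y) /=; last first.
    by rewrite subxx andbT /P; case: hY => [->|->]; rewrite ?eqxx ?orbT.
  rewrite -[LHS](subrK (\sum_(G | Defs.closed cl G && (G \proper Y)) alpha cl G)).
  rewrite -alpha_unfold; congr (_ + _); apply: eq_bigl => H.
  case: hY => [->|/andP[cY pY]].
    rewrite /P properEneq; case: (eqVneq H X) => [->|nHX] /=; first by rewrite !andbF.
    by case: (Defs.closed cl H); case: (H \subset X).
  rewrite /P; apply/idP/idP.
    move=> /andP[cH pHY]; have pHX := proper_trans pHY pY.
    by rewrite cH pHX orbT /=; move: pHY; rewrite properEneq => /andP[-> ->].
  move=> /andP[/andP[/orP[/eqP->|/andP[cH _]] sHY] nHY].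
    by move: pY; rewrite properE sHY andbF.
  by rewrite cH properEneq nHY sHY.
have K (U : {set T}) : U \subset X -> \sum_(S in powerset FF) (-1) ^+ #|S| * (U \subset F_S FF S)%:R
    = ([set F in FF | U \subset F] == set0)%:R :> int.
  move=> UX; rewrite -alt_sum [RHS]big_mkcond [LHS]big_mkcond /=; apply: eq_bigr => S _.
  have -> : (S \in powerset [set F in FF | U \subset F]) =
            (S \in powerset FF) && (U \subset F_S FF S).
    rewrite !powersetE /F_S; case: (eqVneq S set0) => [->|S0].
      by rewrite !sub0set cupFF UX.
    apply/idP/idP.
      move/subsetP => h; apply/andP; split.
        by apply/subsetP => F /h; rewrite inE => /andP[].
      by apply/bigcapsP => F /h; rewrite inE => /andP[].
    by case/andP => /subsetP h1 /bigcapsP h2; apply/subsetP => F FS; rewrite inE h1 // h2.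
  by case: (S \in powerset FF); case: (U \subset F_S FF S); rewrite /= ?mulr1 ?mulr0.
have FSX (S : {set {set T}}) : S \in powerset FF -> F_S FF S \subset X.
  by move/FS_ok => [->|/andP[_ /proper_sub]].
have claim1 : \sum_(S in powerset FF) (-1) ^+ #|S| * (#|F_S FF S|)%:Z = 0.
  rewrite (eq_bigr (fun S : {set {set T}} => \sum_(x in X) (-1) ^+ #|S| * ([set x] \subset F_S FF S)%:R)); last first.
    move=> S /FSX sX; rewrite (card_sum sX) mulr_sumr; apply: eq_bigr => x _.
    by rewrite sub1set.
  rewrite exchange_big /= big1 // => x xX; rewrite K ?sub1set //.
  have := xX; rewrite -cupFF => /bigcupP [F FFF xF].
  case: eqP => // /setP /(_ F); rewrite inE FFF sub1set xF in_set0 //.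
have claim2 : \sum_(S in powerset FF) (-1) ^+ #|S| * (#|F_S FF S|%:Z - (gdim cl (F_S FF S))%:Z)
    = alpha cl X.
  rewrite (eq_bigr (fun S : {set {set T}} => \sum_(H | P H) (-1) ^+ #|S| * (H \subset F_S FF S)%:R * alpha cl H)); last first.
    move=> S /FS_ok /fsum ->; rewrite big_mkcondr /= mulr_sumr; apply: eq_bigr => H _.
    by case: (H \subset F_S FF S); rewrite ?mulr1 ?mulr0 ?mul1r ?mul0r.
  rewrite exchange_big /= (bigD1 X) /=; last by rewrite /P eqxx.
  rewrite -mulr_suml K // big1 ?addr0.
    have -> : [set F in FF | X \subset F] == set0.
      apply/eqP/setP => F; rewrite !inE.
      by apply/negP => /andP[/andP[_ pF] sXF]; move: pF; rewrite properE sXF andbF.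
    by rewrite mul1r.
  move=> H /andP[PH nHX]; rewrite -mulr_suml K; last first.
    by case/orP: PH => [/eqP ->|/andP[_ /proper_sub]].
  have HFF : H \in FF by rewrite inFF; case/orP: PH => [/eqP HX0|//]; rewrite HX0 eqxx in nHX.
  case: eqP => [/setP /(_ H)|]; last by rewrite mul0r.
  by rewrite inE HFF subxx in_set0.
rewrite /Delta -/FF.
have -> : \sum_(S in powerset FF) (-1) ^+ #|S| * (gdim cl (F_S FF S))%:Z =
   \sum_(S in powerset FF) (-1) ^+ #|S| * (#|F_S FF S|)%:Z -
   \sum_(S in powerset FF) (-1) ^+ #|S| * (#|F_S FF S|%:Z - (gdim cl (F_S FF S))%:Z).
  rewrite -sumrB; apply: eq_bigr => S _.
  by rewrite mulrBr opprB addrC subrK.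
by rewrite claim1 claim2 sub0r opprK.
Qed.
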